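(* For every $x\in P$ (the poset defined below) there is a sequence $(x_i)_{i<\omega}$ in $P$ such that either $x_i<x_j$ for all $j<i<\omega$ and $x$ is the greatest lower bound of $\{x_i: i<\omega\}$ in $P$, or $x_i<x_j$ for all $i<j<\omega$ and $x$ is the least upper bound of $\{x_i:i<\omega\}$ in $P$.
   Context: Let $P=\{p\}\cup\{p_{i_0,\ldots,i_n}: 0\le n<\omega,\ i_0,\ldots,i_n\in\omega\}$ (all these symbols distinct). Let $\le$ be the reflexive–transitive closure of the following strict relations: (0) for all $0\le j<i<\omega$: $p<p_i<p_j$; (E) for all $r\ge 0$, all $i_0,\ldots,i_{2r}\in\omega$, all $k\le i_{2r}$ and all $i<j<\omega$: $p_{i_0,\ldots,i_{2r},i}<p_{i_0,\ldots,i_{2r},j}<p_{i_0,\ldots,i_{2r-1},k}$ (for $r=0$ the last element is $p_k$); (O) for all $r\ge0$, all $i_0,\ldots,i_{2r+1}\in\omega$, all $k\le i_{2r+1}$ and all $j<i<\omega$: $p_{i_0,\ldots,i_{2r},k}<p_{i_0,\ldots,i_{2r+1},i}<p_{i_0,\ldots,i_{2r+1},j}$. This $\le$ is a partial order. *)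

(* Defs.v *)
From Stdlib Require Import List Arith Relations.
Import ListNotations.

(* The poset P: the element p is represented by the empty list [],
   and p_{i_0,...,i_n} (n >= 0) by the nonempty list [i_0; ...; i_n]. *)
Definition P := list nat.

(* The generating strict relations (0), (E), (O). [gen x y] means x < y.
   In (E): s = i_0..i_{2r} = t ++ [m] with |t| = 2r, m = i_{2r};
   the element p_{i_0..i_{2r-1},k} is t ++ [k] (for r = 0, t = [] and it is p_k).
   In (O): s = i_0..i_{2r+1} = t ++ [m] with |t| = 2r+1, m = i_{2r+1};
   p_{i_0..i_{2r},k} is t ++ [k]. *)
Inductive gen : P -> P -> Prop :=
| gen0_bot (i : nat) : gen [] [i]
| gen0_chain (i j : nat) : j < i -> gen [i] [j]
| genE1 (r : nat) (t : list nat) (m i j : nat) :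
    length t = 2 * r -> i < j -> gen (t ++ [m; i]) (t ++ [m; j])
| genE2 (r : nat) (t : list nat) (m k j : nat) :
    length t = 2 * r -> k <= m -> gen (t ++ [m; j]) (t ++ [k])
| genO1 (r : nat) (t : list nat) (m k i : nat) :
    length t = 2 * r + 1 -> k <= m -> gen (t ++ [k]) (t ++ [m; i])
| genO2 (r : nat) (t : list nat) (m i j : nat) :
    length t = 2 * r + 1 -> j < i -> gen (t ++ [m; i]) (t ++ [m; j]).

Definition Ple : P -> P -> Prop := clos_refl_trans P gen.
Definition Plt (x y : P) : Prop := Ple x y /\ x <> y.

Definition is_glb (x : P) (f : nat -> P) : Prop :=
  (forall i, Ple x (f i)) /\
  (forall y, (forall i, Ple y (f i)) -> Ple y x).

Definition is_lub (x : P) (f : nat -> P) : Prop :=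
  (forall i, Ple (f i) x) /\
  (forall y, (forall i, Ple (f i) y) -> Ple x y).

(* Main.v *)
Require Import Defs.
From Stdlib Require Import List Arith Relations Lia.
Import ListNotations.

Lemma app2 (t:list nat) a b : t ++ [a;b] = (t++[a])++[b].
Proof. rewrite <- app_assoc. reflexivity. Qed.

Definition ext (x:P) (i:nat) (z:P) := exists M rest, i <= M /\ z = x ++ M :: rest.

Lemma ext_app x i z l : ext x i z -> ext x i (z ++ l).
Proof. intros [M [r [H ->]]]. exists M, (r ++ l). split; auto. rewrite <- app_assoc. reflexivity. Qed.

Lemma snoc_split (x:list nat) M rest u a : x ++ M :: rest = u ++ [a] ->
  (rest = [] /\ u = x /\ a = M) \/ (exists r', rest = r' ++ [a] /\ u = x ++ M :: r').
Proof.
  induction rest as [|b r _] using rev_ind; intros H.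
  - apply app_inj_tail in H. destruct H; subst; auto.
  - rewrite app_comm_cons, app_assoc in H. apply app_inj_tail in H. destruct H; subst.
    right. exists r. auto.
Qed.

Lemma sibE t m k r : length t = 2*r -> k <= m -> Ple (t++[m]) (t++[k]).
Proof.
  intros Hl Hk. destruct (Nat.eq_dec k m) as [->|Hn]; [apply rt_refl|]. apply rt_step.
  destruct t as [|b t1].
  - simpl. constructor. lia.
  - destruct (exists_last (l:=b::t1)) as [t0 [a Ht]]; [discriminate|]. rewrite Ht in *.
    rewrite <- !app_assoc. simpl. apply (genO2 (r-1)); [|lia].
    rewrite length_app in Hl. simpl in Hl. lia.
Qed.

Lemma sibO t m k r : length t = 2*r+1 -> k <= m -> Ple (t++[k]) (t++[m]).
Proof.
  intros Hl Hk. destruct (Nat.eq_dec k m) as [->|Hn]; [apply rt_refl|]. apply rt_step.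
  destruct t as [|b t1]. { simpl in Hl. lia. }
  destruct (exists_last (l:=b::t1)) as [t0 [a Ht]]; [discriminate|]. rewrite Ht in *.
  rewrite <- !app_assoc. simpl. apply (genE1 r); [|lia].
  rewrite length_app in Hl. simpl in Hl. lia.
Qed.

Ltac lencontra H := apply (f_equal (@length nat)) in H; rewrite ?length_app in H; simpl in H; lia.

Lemma up_step x r i y z : length x = 2*r+1 -> gen y z -> ext x i y -> Ple x z \/ ext x i z.
Proof.
  intros Hx G. destruct G; intros [M [rest [HiM Hy]]].
  - lencontra Hy.
  - lencontra Hy.
  - rewrite app2 in Hy. symmetry in Hy. apply snoc_split in Hy as [[-> [Hu ->]]|[r' [-> Hu]]].
    + right. exists j, []. split; [lia|]. rewrite app2, Hu. reflexivity.
    + right. rewrite app2, Hu. apply ext_app. exists M, r'. auto.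
  - rewrite app2 in Hy. symmetry in Hy. apply snoc_split in Hy as [[-> [Hu ->]]|[r' [-> Hu]]].
    + left. rewrite <- Hu. eapply sibE; eauto.
    + symmetry in Hu. apply snoc_split in Hu as [[-> [Hu2 ->]]|[r'' [-> Hu2]]].
      * subst. lia.
      * right. rewrite Hu2. apply ext_app. exists M, r''. auto.
  - symmetry in Hy. apply snoc_split in Hy as [[-> [Hu ->]]|[r' [-> Hu]]].
    + right. rewrite Hu. exists m, [i0]. split; [lia|reflexivity].
    + right. rewrite Hu. apply ext_app. exists M, r'. auto.
  - rewrite app2 in Hy. symmetry in Hy. apply snoc_split in Hy as [[-> [Hu ->]]|[r' [-> Hu]]].
    + rewrite <- Hu in Hx. rewrite length_app in Hx. simpl in Hx. lia.
    + right. rewrite app2, Hu. apply ext_app. exists M, r'. auto.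
Qed.

Lemma down_step x r i y z : length x = 2*r+2 -> gen z y -> ext x i y -> Ple z x \/ ext x i z.
Proof.
  intros Hx G. destruct G; intros [M [rest [HiM Hy]]].
  - lencontra Hy.
  - lencontra Hy.
  - rewrite app2 in Hy. symmetry in Hy. apply snoc_split in Hy as [[-> [Hu ->]]|[r' [-> Hu]]].
    + rewrite <- Hu in Hx. rewrite length_app in Hx. simpl in Hx. lia.
    + right. rewrite app2, Hu. apply ext_app. exists M, r'. auto.
  - symmetry in Hy. apply snoc_split in Hy as [[-> [Hu ->]]|[r' [-> Hu]]].
    + right. rewrite Hu. exists m, [j]. split; [lia|reflexivity].
    + right. rewrite Hu. apply ext_app. exists M, r'. auto.
  - rewrite app2 in Hy. symmetry in Hy. apply snoc_split in Hy as [[-> [Hu ->]]|[r' [-> Hu]]].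
    + left. rewrite <- Hu. eapply sibO; eauto.
    + symmetry in Hu. apply snoc_split in Hu as [[-> [Hu2 ->]]|[r'' [-> Hu2]]].
      * subst. lia.
      * right. rewrite Hu2. apply ext_app. exists M, r''. auto.
  - rewrite app2 in Hy. symmetry in Hy. apply snoc_split in Hy as [[-> [Hu ->]]|[r' [-> Hu]]].
    + right. rewrite app2, Hu. exists i0, []. split; [lia|reflexivity].
    + right. rewrite app2, Hu. apply ext_app. exists M, r'. auto.
Qed.

Lemma ext0_cons i b l : i <= b -> ext [] i (b::l).
Proof. intros. exists b, l. auto. Qed.

Lemma down0_step i y z : gen z y -> ext [] i y -> Ple z [] \/ ext [] i z.
Proof.
  intros G. destruct G; intros [M [rest [HiM Hy]]]; simpl in Hy.
  - left. apply rt_refl.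
  - injection Hy; intros; subst. right. apply ext0_cons. lia.
  - right. destruct t as [|b t0]; simpl in *; injection Hy; intros; subst; apply ext0_cons; lia.
  - right. destruct t as [|b t0]; simpl in *; injection Hy; intros; subst; apply ext0_cons; lia.
  - right. destruct t as [|b t0]; simpl in *; [lia|]; injection Hy; intros; subst; apply ext0_cons; lia.
  - right. destruct t as [|b t0]; simpl in *; injection Hy; intros; subst; apply ext0_cons; lia.
Qed.

Lemma up_clos x r i y z : length x = 2*r+1 -> Ple y z -> Ple x y \/ ext x i y -> Ple x z \/ ext x i z.
Proof.
  intros Hx H. apply clos_rt_rt1n in H. induction H as [|y y' z G _ IH]; intros Hy; auto.
  apply IH. destruct Hy as [Hy|Hy].
  - left. eapply rt_trans; [exact Hy|apply rt_step; exact G].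
  - eapply up_step; eauto.
Qed.

Lemma down_clos x i z y (stp : forall i y z, gen z y -> ext x i y -> Ple z x \/ ext x i z) :
  Ple z y -> Ple y x \/ ext x i y -> Ple z x \/ ext x i z.
Proof.
  intros H. apply clos_rt_rt1n in H. induction H as [|z z' y G _ IH]; intros Hy; auto.
  destruct (IH Hy) as [H|H].
  - left. eapply rt_trans; [apply rt_step; exact G|exact H].
  - eapply stp; eauto.
Qed.

Lemma unbounded (x y : P) Q : (forall i, Q \/ ext x i y) -> Q.
Proof.
  intros H. destruct (H 0) as [q|[M [rest [_ Hy]]]]; auto.
  destruct (H (S M)) as [q|[M' [rest' [HM Hy']]]]; auto.
  rewrite Hy in Hy'. apply app_inv_head in Hy'. injection Hy'. lia.
Qed.

Theorem mainTheorem7 :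
  forall x : P, exists f : nat -> P,
    ((forall i j : nat, j < i -> Plt (f i) (f j)) /\ is_glb x f) \/
    ((forall i j : nat, i < j -> Plt (f i) (f j)) /\ is_lub x f).
Proof.
  intros x. destruct x as [|a l].
  - exists (fun i => [i]). left. split.
    + intros i j Hji. split. apply rt_step; constructor; auto. intro H; injection H; lia.
    + split. intro i; apply rt_step; constructor. intros y Hy.
      apply (unbounded [] y). intros i.
      apply (down_clos [] i y [i]); auto.
      * intros; eapply down0_step; eauto.
      * right. exists i, []. auto.
  - destruct (exists_last (l:=a::l)) as [t [m Ht]]; [discriminate|].
    rewrite Ht. clear Ht.
    destruct (Nat.Even_or_Odd (length t)) as [[r Hr]|[r Hr]].
    + assert (Hx : length (t++[m]) = 2*r+1) by (rewrite length_app; simpl; lia).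
      exists (fun i => (t++[m])++[i]). right. split.
      * intros i j Hij. split.
        -- rewrite <- !app2. apply rt_step. apply (genE1 r); auto.
        -- intro H. apply app_inv_head in H. injection H. lia.
      * split.
        -- intro i. rewrite <- app2. apply rt_step. apply (genE2 r t m m i); auto.
        -- intros y Hy. apply (unbounded (t++[m]) y). intros i.
           apply (up_clos (t++[m]) r i ((t++[m])++[i])); auto.
           right. exists i, []. auto.
    + assert (Hx : length (t++[m]) = 2*r+2) by (rewrite length_app; simpl; lia).
      exists (fun i => (t++[m])++[i]). left. split.
      * intros i j Hij. split.
        -- rewrite <- !app2. apply rt_step. apply (genO2 r); auto.
        -- intro H. apply app_inv_head in H. injection H. lia.
      * split.
        -- intro i. rewrite <- app2. apply rt_step. apply (genO1 r t m m i); auto.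
        -- intros y Hy. apply (unbounded (t++[m]) y). intros i.
           apply (down_clos (t++[m]) i y ((t++[m])++[i])); auto.
           ++ intros; eapply down_step; eauto.
           ++ right. exists i, []. auto.
Qed.
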